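(* In the same situation, the coefficients $\varepsilon_i$ ($i\ge a+1$) satisfy $ord(\varepsilon_i)\ge i+\min_{2\le j\le a}\{ord(\delta_j)-j\}$.
   Context: Setting: $a\ge2$, $c_i(N)\in t^i\mathbb C[[t]]$, $\delta_i\in t^{i+1}\mathbb C[[t]]$, $c_i(N+1)=c_i(N)+\delta_i$ ($2\le i\le a$), and $\delta_i'$ ($2\le i\le a$), $\varepsilon_i$ ($i>a$) are the unique elements of $\mathbb C[[t]]$ such that $s(N+1)=s-\frac1a\sum_{i=2}^a\delta_i's^{1-i}+\sum_{i>a}\varepsilon_is^{1-i}$ satisfies $s(N+1)^a+\sum_{k=2}^ac_k(N+1)s(N+1)^{a-k}=s^a+\sum_{k=2}^ac_k(N)s^{a-k}$. For $\delta\in\mathbb C[[t]]$, $ord(\delta)$ is the largest $k$ with $t^k\mid\delta$. *)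

(* Defs.v *)
From mathcomp Require Import all_boot all_algebra.
From mathcomp Require Import complex Rstruct.
Set Implicit Arguments. Unset Strict Implicit. Unset Printing Implicit Defensive.
Import GRing.Theory Num.Theory.
Local Open Scope ring_scope.

Definition C : numClosedFieldType := Rdefinitions.R[i].

Definition ps := nat -> C.

(* t^k divides f, i.e. f \in t^k C[[t]], i.e. ord(f) >= k
   (ord(f) = largest k with t^k | f, = +oo for f = 0). *)
Definition tdvd (k : nat) (f : ps) : Prop := forall n : nat, (n < k)%N -> f n = 0.

Definition ps_mul (f g : ps) : ps := fun n => \sum_(k < n.+1) f k * g (n - k)%N.

(* Elements of C[[t]][[x]], x = s^{-1}:  F i = coefficient of x^i = s^{-i}. *)
Definition ser := nat -> ps.

Definition ser_one : ser := fun i n => ((i == 0%N) && (n == 0%N))%:R.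
Definition ser_mul (F G : ser) : ser :=
  fun i n => \sum_(k < i.+1) ps_mul (F k) (G (i - k)%N) n.
Definition ser_pow (F : ser) (m : nat) : ser := iter m (ser_mul F) ser_one.
Definition ser_mono (c : ps) (k : nat) : ser := fun i n => if i == k then c n else 0.

(* s(N+1)/s = 1 + sum_{i>=2} e_i s^{-i}, where
   e_i = -(1/a) delta'_i for 2 <= i <= a and e_i = eps_i for i > a. *)
Definition sratio (a : nat) (delta' eps : nat -> ps) : ser :=
  fun i n => if i == 0%N then (n == 0%N)%:R
             else if i == 1%N then 0
             else if (i <= a)%N then - (a%:R)^-1 * delta' i n
             else eps i n.

(* s^{-a} (s(N+1)^a + sum_{k=2}^a c_k(N+1) s(N+1)^{a-k}) *)
Definition lhs_norm (a : nat) (c1 : nat -> ps) (u : ser) : ser :=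
  fun i n => ser_pow u a i n +
             \sum_(2 <= k < a.+1) ser_mul (ser_mono (c1 k) k) (ser_pow u (a - k)) i n.

(* s^{-a} (s^a + sum_{k=2}^a c_k(N) s^{a-k}) *)
Definition rhs_norm (a : nat) (c0 : nat -> ps) : ser :=
  fun i n => ser_one i n + \sum_(2 <= k < a.+1) ser_mono (c0 k) k i n.

(* Main.v *)
Require Import Defs.
From mathcomp Require Import all_boot all_algebra.
From mathcomp Require Import complex Rstruct.
From mathcomp Require Import ring zify.
From Stdlib Require Import FunctionalExtensionality.
Import GRing.Theory Num.Theory.
Local Open Scope ring_scope.

Lemma tdvdW p q f : (q <= p)%N -> tdvd p f -> tdvd q f.
Proof. move=> hqp h n hn; apply: h; exact: leq_trans hn hqp. Qed.

Lemma ps_mul_tdvd p q r f g : tdvd p f -> tdvd q g -> (r <= p + q)%N -> tdvd r (ps_mul f g).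
Proof.
move=> hf hg hr n hn; rewrite /ps_mul; apply: big1 => k _.
have [hk|hk] := ltnP k p; first by rewrite hf ?mul0r.
rewrite hg ?mulr0 //. have := ltn_ord k. lia.
Qed.

Lemma ps_mul0l f g n : (forall p, f p = 0) -> ps_mul f g n = 0.
Proof. by move=> h; apply: big1 => k _; rewrite h mul0r. Qed.
Lemma ps_mul0r f g n : (forall p, g p = 0) -> ps_mul f g n = 0.
Proof. by move=> h; apply: big1 => k _; rewrite h mulr0. Qed.
Lemma ps_mul_ext f g g' n : (forall p, g p = g' p) -> ps_mul f g n = ps_mul f g' n.
Proof. by move=> h; apply: eq_bigr => k _; rewrite h. Qed.

Lemma ps_mulDl f g h n : ps_mul (fun p => f p + g p) h n = ps_mul f h n + ps_mul g h n.
Proof. by rewrite /ps_mul -big_split; apply: eq_bigr => k _; rewrite mulrDl. Qed.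
Lemma ps_mulDr f g h n : ps_mul h (fun p => f p + g p) n = ps_mul h f n + ps_mul h g n.
Proof. by rewrite /ps_mul -big_split; apply: eq_bigr => k _; rewrite mulrDr. Qed.

Lemma ps_mul1r f n : ps_mul f (fun p => (p == 0%N)%:R) n = f n.
Proof.
rewrite /ps_mul big_ord_recr /= subnn eqxx mulr1 big1 ?add0r // => k _.
by rewrite subn_eq0 leqNgt ltn_ord /= mulr0.
Qed.
Lemma ps_mul1l f n : ps_mul (fun p => (p == 0%N)%:R) f n = f n.
Proof.
by rewrite /ps_mul big_ord_recl /= subn0 mul1r big1 ?addr0 // => k _; rewrite mul0r.
Qed.

Lemma ser_mul1l G j n : ser_mul ser_one G j n = G j n.
Proof.
rewrite /ser_mul big_ord_recl /= subn0 ps_mul1l big1 ?addr0 // => k _.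
by apply: ps_mul0l => p.
Qed.
Lemma ser_mul1r F j n : ser_mul F ser_one j n = F j n.
Proof.
rewrite /ser_mul big_ord_recr /= subnn ps_mul1r big1 ?add0r // => k _.
apply: ps_mul0r => p; rewrite /ser_one.
by rewrite subn_eq0 leqNgt ltn_ord.
Qed.
Lemma ser_mulDl F G H j n :
  ser_mul (fun i p => F i p + G i p) H j n = ser_mul F H j n + ser_mul G H j n.
Proof. by rewrite /ser_mul -big_split; apply: eq_bigr => k _; exact: ps_mulDl. Qed.
Lemma ser_mulDr F G H j n :
  ser_mul H (fun i p => F i p + G i p) j n = ser_mul H F j n + ser_mul H G j n.
Proof. by rewrite /ser_mul -big_split; apply: eq_bigr => k _; exact: ps_mulDr. Qed.

Lemma sum_if_eq (N k : nat) (x : C) :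
  \sum_(p < N) (if (p : nat) == k then x else 0) = if (k < N)%N then x else 0.
Proof.
elim: N => [|N IH]; first by rewrite big_ord0.
rewrite big_ord_recr /= IH.
case: (ltngtP k N) => h.
- by rewrite addr0 ltnS ltnW.
- by rewrite addr0 ltnS leqNgt h.
- by rewrite add0r h ltnS leqnn.
Qed.

Lemma ser_mul_mono c k G i n :
  ser_mul (ser_mono c k) G i n = if (k <= i)%N then ps_mul c (G (i - k)%N) n else 0.
Proof.
rewrite /ser_mul.
transitivity (\sum_(p < i.+1) if (p : nat) == k then ps_mul c (G (i - k)%N) n else 0).
  apply: eq_bigr => p _; rewrite /ser_mono.
  case: eqP => [->|hp] //=; exact: ps_mul0l.
by rewrite sum_if_eq ltnS.
Qed.

Definition vser (u : ser) : ser := fun i n => u i n - ser_one i n.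
Definition Dser (u : ser) (l : nat) : ser := fun i n => ser_pow u l i n - ser_one i n.

Lemma u_split u : u = fun i n => ser_one i n + vser u i n.
Proof.
apply: functional_extensionality_dep => i; apply: functional_extensionality_dep => n.
by rewrite /vser addrC subrK.
Qed.
Lemma pow_split u l : ser_pow u l = fun i n => ser_one i n + Dser u l i n.
Proof.
apply: functional_extensionality_dep => i; apply: functional_extensionality_dep => n.
by rewrite /Dser addrC subrK.
Qed.

Lemma Dstep u l j n :
  Dser u l.+1 j n = vser u j n + Dser u l j n + ser_mul (vser u) (Dser u l) j n.
Proof.
have E : ser_mul u (ser_pow u l) j n =
  ser_mul (fun i n => ser_one i n + vser u i n) (fun i n => ser_one i n + Dser u l i n) j n
  := congr2 (fun F G => ser_mul F G j n) (u_split u) (pow_split u l).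
rewrite /Dser [ser_pow u l.+1]/= -/(ser_pow u l) E ser_mulDl ser_mul1l ser_mulDr ser_mul1r.
rewrite /Dser; set A := ser_one j n; set B := ser_pow u l j n; set V := vser u j n; set X := ser_mul _ _ j n. ring.
Qed.

Lemma D0 u l n : (forall n, vser u 0 n = 0) -> Dser u l 0 n = 0.
Proof.
move=> hu0; elim: l n => [|l IH] n; first by rewrite /Dser /= subrr.
by rewrite Dstep hu0 IH /ser_mul big_ord1 /= ps_mul0l // !addr0.
Qed.

Lemma conv u m i l : (forall n, vser u 0 n = 0) ->
  (forall k, (k < i)%N -> tdvd (k + m) (vser u k)) ->
  (forall j, (j < i)%N -> tdvd (j + m) (Dser u l j)) ->
  forall j, (j <= i)%N -> tdvd (j + m) (ser_mul (vser u) (Dser u l) j).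
Proof.
move=> hu0 hv hD j hj n hn; rewrite /ser_mul; apply: big1 => k _.
have [k0|kpos] := posnP k; first by rewrite k0 ps_mul0l.
have [kj|kj] := eqVneq (k : nat) j.
  by rewrite kj subnn ps_mul0r // => p; exact: D0.
have kj' : (k < j)%N by rewrite ltn_neqAle kj -ltnS ltn_ord.
have H1 : tdvd (k + m) (vser u k) by apply: hv; exact: leq_trans kj' hj.
have H2 : tdvd (j - k) (Dser u l (j - k)%N).
  apply: (tdvdW (j - k + m)%N); first exact: leq_addr.
  apply: (hD (j - k)%N); move: kpos hj kj'; set kk := nat_of_ord k. lia.
apply: (ps_mul_tdvd _ _ (j + m)%N _ _ H1 H2 _ n hn); move: kj'; set kk := nat_of_ord k. lia.
Qed.

Lemma Dgood u m i : (forall n, vser u 0 n = 0) ->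
  (forall k, (k < i)%N -> tdvd (k + m) (vser u k)) ->
  forall l, (forall j, (j < i)%N -> tdvd (j + m) (Dser u l j)) /\
    tdvd (i + m) (fun n => Dser u l i n - l%:R * vser u i n).
Proof.
move=> hu0 hv; elim => [|l [IH1 IH2]].
  split; first by move=> j _ n _; rewrite /Dser /= subrr.
  by move=> n _; rewrite /Dser /= subrr mulr0n mul0r subrr.
have hc := conv u m i l hu0 hv IH1.
split.
  move=> j hj n hn.
  by rewrite Dstep (hv j hj n hn) (IH1 j hj n hn) (hc j (ltnW hj) n hn) !addr0.
move=> n hn; rewrite Dstep (hc i (leqnn i) n hn) addr0.
transitivity (Dser u l i n - l%:R * vser u i n); last exact: IH2 n hn.
set D := Dser u l i n; set V := vser u i n. rewrite mulrS. ring.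
Qed.

Lemma vstep (a : nat) (cN delta delta' eps : nat -> ps) (m i : nat) :
  (2 <= a)%N ->
  (forall i : nat, (2 <= i <= a)%N -> tdvd i (cN i)) ->
  (forall i n : nat,
     lhs_norm a (fun k m => cN k m + delta k m) (sratio a delta' eps) i n
     = rhs_norm a cN i n) ->
  (forall j : nat, (2 <= j <= a)%N -> tdvd (j + m) (delta j)) ->
  (0 < i)%N ->
  (forall k, (k < i)%N -> tdvd (k + m) (vser (sratio a delta' eps) k)) ->
  tdvd (i + m) (vser (sratio a delta' eps) i).
Proof.
move=> ha hc Heq hd hi hv.
set u := sratio a delta' eps.
have hu0 : forall n, vser u 0 n = 0 by move=> n; rewrite /vser /u /sratio /ser_one /= subrr.
have hD := Dgood u m i hu0 hv.
have one0 : forall j n, (0 < j)%N -> ser_one j n = 0.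
  by move=> j n hj; rewrite /ser_one (negbTE (lt0n_neq0 hj)) /= mulr0n.
have hT : forall k, (2 <= k <= a)%N -> tdvd (i + m) (fun n =>
   ser_mul (ser_mono (fun p => cN k p + delta k p) k) (ser_pow u (a - k)) i n
   - ser_mono (cN k) k i n).
  move=> k /andP[hk2 hka] p hp /=; rewrite ser_mul_mono /ser_mono.
  case: (ltngtP k i) => hki.
  - rewrite subr0 ps_mulDl.
    have hP : tdvd (i - k + m) (ser_pow u (a - k) (i - k)%N).
      move=> q hq; have hik : (i - k < i)%N by lia.
      have hik0 : (0 < i - k)%N by lia.
      have := (hD (a - k)%N).1 (i - k)%N hik q hq.
      by rewrite /Dser one0 ?subr0.
    rewrite (ps_mul_tdvd _ _ (i + m)%N _ _ (hc k _) hP _ p hp) ?hk2 //; last lia.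
    rewrite (ps_mul_tdvd _ _ (i + m)%N _ _ (hd k _) (tdvdW _ _ _ (leq_addr m _) hP) _ p hp)
      ?hk2 ?addr0 //; lia.
  - by rewrite subrr.
  - subst k; rewrite subnn.
    rewrite (ps_mul_ext _ _ (fun q => (q == 0%N)%:R)).
      by rewrite ps_mul1r addrC addKr; apply: (hd i _ p hp); rewrite hk2.
    move=> q; rewrite /u pow_split -/u D0 // addr0 /ser_one /=.
    done.
move=> n hn.
have E := Heq i n; rewrite /lhs_norm /rhs_norm one0 // add0r in E.
have hS : \sum_(2 <= k < a.+1)
    ser_mul (ser_mono (fun p => cN k p + delta k p) k) (ser_pow u (a - k)) i n
  = \sum_(2 <= k < a.+1) ser_mono (cN k) k i n.
  apply/eqP; rewrite -subr_eq0 -sumrB; apply/eqP.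
  rewrite big_nat_cond; apply: big1 => k /andP[/andP[h1 h2] _].
  by apply: (hT k _ n hn); rewrite h1 -ltnS h2.
rewrite hS in E.
set s := \sum_(2 <= k < a.+1) ser_mono (cN k) k i n in E.
have P0 : ser_pow u a i n = 0 by rewrite -[LHS](addrK s) E subrr.
have := (hD a).2 n hn; rewrite /Dser P0 one0 // subrr sub0r.
move/eqP; rewrite oppr_eq0 mulf_eq0 pnatr_eq0 => /orP[/eqP a0|/eqP //].
by move: ha; rewrite a0.
Qed.

Theorem mainTheorem8 (a : nat) (cN delta delta' eps : nat -> ps) :
  (2 <= a)%N ->
  (forall i : nat, (2 <= i <= a)%N -> tdvd i (cN i)) ->
  (forall i : nat, (2 <= i <= a)%N -> tdvd i.+1 (delta i)) ->
  (forall i n : nat,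
     lhs_norm a (fun k m => cN k m + delta k m) (sratio a delta' eps) i n
     = rhs_norm a cN i n) ->
  forall i : nat, (a < i)%N ->
  forall m : nat,
    (forall j : nat, (2 <= j <= a)%N -> tdvd (j + m) (delta j)) ->
    tdvd (i + m) (eps i).
Proof.
move=> ha hc _ Heq i hia m hd.
have hu0 : forall n, vser (sratio a delta' eps) 0 n = 0.
  by move=> n; rewrite /vser /sratio /ser_one /= subrr.
have key : forall i k, (k < i)%N -> tdvd (k + m) (vser (sratio a delta' eps) k).
  elim => [|i' IH] k hk //.
  rewrite ltnS leq_eqVlt in hk; case/orP: hk => [/eqP ->|hk]; last exact: IH.
  have [->|i'pos] := posnP i'; first by move=> n _; exact: hu0.
  exact: (vstep _ _ _ _ _ m i' ha hc Heq hd i'pos IH).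
move=> n hn; have := key i.+1 i (ltnSn i) n hn.
have i0 : (i == 0%N) = false by apply/eqP => h; move: hia ha; rewrite h.
have i1 : (i == 1%N) = false by apply/eqP => h; move: hia ha; rewrite h; case: (a) => [|[|a0]].
rewrite /vser /sratio /ser_one i0 i1 leqNgt hia /= mulr0n subr0.
done.
Qed.
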